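(* Let $V$ be a complex vector space of dimension $r+1$ and let $\underline{d}=(d_1,\ldots,d_s)$ be a sequence of integers $\geq 2$. Let $W=\operatorname{Sym}^{d_1}V\oplus\cdots\oplus\operatorname{Sym}^{d_s}V$. For any integer $s'\geq 0$ and any $1\leq k\leq r$, let $t$ be an integer with $$0<t<\left[\binom{\underline{d}+r}{r}-\binom{\underline{d}+r-k}{r-k}\right]-ks'.$$ Then for every irreducible $\mathrm{GL}(V)$-summand $\Gamma^\lambda V$ of $\wedge^tW$ we have $\lambda_k<\binom{\underline{d}+r}{r+1}-s'$.
   Context: For integers $a,b$, $\binom{\underline{d}+a}{b}$ means $\sum_{i=1}^s\binom{d_i+a}{b}$. $\Gamma^\lambda V$ denotes the irreducible $\mathrm{GL}(V)$-module with highest weight the partition $\lambda=(\lambda_1\ge\cdots\ge\lambda_{r+1})$. *)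

(* Defs.v *)
From mathcomp Require Import all_boot all_order all_algebra all_fingroup all_field.
Set Implicit Arguments. Unset Strict Implicit. Unset Printing Implicit Defensive.
Import Order.TTheory GRing.Theory Num.Theory.

(* V = C^{r+1} with basis x_0, ..., x_r.
   Monomials of degree D in r+1 variables: the standard basis of Sym^D V. *)
Definition Mon (r D : nat) :=
  {a : {ffun 'I_r.+1 -> 'I_D.+1} | \sum_(j < r.+1) (a j : nat) == D}.

(* Basis of W = Sym^{d_1} V (+) ... (+) Sym^{d_s} V : pairs (summand i, monomial). *)
Definition WBasis (r : nat) (d : seq nat) :=
  {i : 'I_(size d) & Mon r (nth 0 d i)}.

Definition expo (r : nat) (d : seq nat) (b : WBasis r d) (j : 'I_r.+1) : nat :=
  (val (projT2 b)) j.

Local Open Scope ring_scope.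

(* Matrix of the elementary endomorphism E_{pq} of V (E_{pq} x_q = x_p), acting on W
   by derivations: E_{pq} x^a = a_q x^{a - e_q + e_p}.
   gl_W p q c b = coefficient of the basis vector c in E_{pq} b. *)
Definition gl_W (r : nat) (d : seq nat) (p q : 'I_r.+1) (c b : WBasis r d) : algC :=
  if (tag c == tag b) &&
     [forall j : 'I_r.+1, expo c j + (q == j) == expo b j + (p == j)]%N
  then (expo b q)%:R else 0.

(* Elements of the t-th tensor power of W, as functions on t-tuples of basis vectors
   (coefficient functions). wedge^t W is the subspace of alternating tensors. *)
Definition tensorW (r : nat) (d : seq nat) (t : nat) :=
  {ffun 'I_t -> WBasis r d} -> algC.

Definition alternating (r : nat) (d : seq nat) (t : nat) (T : tensorW r d t) : Prop :=
  forall (c : {ffun 'I_t -> WBasis r d}) (m1 m2 : 'I_t), m1 != m2 ->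
    T [ffun m => c (tperm m1 m2 m)] = - T c.

Definition gl_act (r : nat) (d : seq nat) (t : nat) (p q : 'I_r.+1)
    (T : tensorW r d t) : tensorW r d t :=
  fun c => \sum_(m < t) \sum_(b : WBasis r d)
             gl_W p q (c m) b * T [ffun m' => if m' == m then b else c m'].

Definition highest_weight_vector (r : nat) (d : seq nat) (t : nat)
    (lam : 'I_r.+1 -> nat) (T : tensorW r d t) : Prop :=
  [/\ alternating T,
      exists c, T c != 0,
      forall (p : 'I_r.+1) c, gl_act p p T c = (lam p)%:R * T c &
      forall (p q : 'I_r.+1) c, (p < q)%N -> gl_act p q T c = 0].

(* Gamma^lam V is an irreducible GL(V)-summand of wedge^t W
   iff wedge^t W contains a highest weight vector of weight lam. *)
Definition is_summand_wedge (r : nat) (d : seq nat) (t : nat) (lam : 'I_r.+1 -> nat)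
  : Prop := exists T : tensorW r d t, highest_weight_vector lam T.

(* Main.v *)
Require Import Defs.
From mathcomp Require Import all_boot all_order all_algebra all_fingroup all_field.
Import Order.TTheory GRing.Theory Num.Theory.
From mathcomp Require Import zify ring.
Set Implicit Arguments. Unset Strict Implicit. Unset Printing Implicit Defensive.

Local Open Scope ring_scope.

Definition upd r d t (c : {ffun 'I_t -> WBasis r d}) (m : 'I_t) (b : WBasis r d)
  : {ffun 'I_t -> WBasis r d} := [ffun m' => if m' == m then b else c m'].

Definition actT r d t (X : WBasis r d -> WBasis r d -> algC) (T : tensorW r d t)
  : tensorW r d t :=
  fun c => \sum_(m < t) \sum_(b : WBasis r d) X (c m) b * T (upd c m b).

Lemma gl_actE r d t p q T c : @gl_act r d t p q T c = actT (gl_W p q) T c.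
Proof. by []. Qed.

Lemma upd_same r d t c m b : @upd r d t c m b m = b.
Proof. by rewrite ffunE eqxx. Qed.
Lemma upd_other r d t c m b m' : m' != m -> @upd r d t c m b m' = c m'.
Proof. by move=> h; rewrite ffunE (negbTE h). Qed.
Lemma upd_upd_same r d t c m b b' : @upd r d t (upd c m b) m b' = upd c m b'.
Proof. by apply/ffunP=> i; rewrite !ffunE; case: eqP. Qed.
Lemma upd_comm r d t c m b m' b' : m' != m ->
  @upd r d t (upd c m b) m' b' = upd (upd c m' b') m b.
Proof.
move=> h; apply/ffunP=> i; rewrite !ffunE.
case: (eqVneq i m') => [ei|ni]; case: (eqVneq i m) => [ei'|ni'] //.
by rewrite -ei -ei' eqxx in h.
Qed.
Lemma upd_id r d t c m : @upd r d t c m (c m) = c.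
Proof. by apply/ffunP=> i; rewrite !ffunE; case: eqP => // ->. Qed.

Lemma act_ext r d t X (T U : tensorW r d t) :
  (forall c, T c = U c) -> forall c, actT X T c = actT X U c.
Proof. by move=> h c; apply: eq_bigr => m _; apply: eq_bigr => b _; rewrite h. Qed.

Lemma act_scale r d t X (a : algC) (T : tensorW r d t) c :
  actT X (fun c => a * T c) c = a * actT X T c.
Proof.
rewrite /actT mulr_sumr; apply: eq_bigr => m _; rewrite mulr_sumr.
by apply: eq_bigr => b _; rewrite mulrCA.
Qed.

Lemma act_zero r d t X (T : tensorW r d t) :
  (forall c, T c = 0) -> forall c, actT X T c = 0.
Proof.
by move=> h c; apply: big1 => m _; apply: big1 => b _; rewrite h mulr0.
Qed.

Lemma act_diag r d t (f : WBasis r d -> algC) (T : tensorW r d t) c :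
  actT (fun x y => if x == y then f x else 0) T c = (\sum_m f (c m)) * T c.
Proof.
rewrite /actT mulr_suml; apply: eq_bigr => m _.
rewrite (bigD1 (c m)) //= eqxx upd_id big1 ?addr0 // => b.
by rewrite eq_sym => /negbTE ->; rewrite mul0r.
Qed.

Lemma act_comm r d t X Y (T : tensorW r d t) c :
  actT X (actT Y T) c - actT Y (actT X T) c =
  actT (fun x y => \sum_b (X x b * Y b y - Y x b * X b y)) T c.
Proof.
pose G (X Y : WBasis r d -> WBasis r d -> algC) (m m' : 'I_t) :=
  \sum_b \sum_b' X (c m) b * (Y (upd c m b m') b' * T (upd (upd c m b) m' b')).
have E1 Z1 Z2 : actT Z1 (actT Z2 T) c = \sum_m \sum_m' G Z1 Z2 m m'.
  rewrite /actT; apply: eq_bigr => m _; rewrite /G exchange_big /=.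
  by apply: eq_bigr => b _; rewrite mulr_sumr; apply: eq_bigr => m' _; rewrite mulr_sumr.
have Ed Z1 Z2 m : G Z1 Z2 m m =
    \sum_b' (\sum_b Z1 (c m) b * Z2 b b') * T (upd c m b').
  rewrite /G exchange_big; apply: eq_bigr => b' _; rewrite mulr_suml.
  by apply: eq_bigr => b _; rewrite upd_same upd_upd_same mulrA.
have Eo m m' : m' != m -> G X Y m m' = G Y X m' m.
  move=> h; rewrite /G exchange_big; apply: eq_bigr => b' _; apply: eq_bigr => b _.
  rewrite upd_other // upd_other 1?eq_sym // upd_comm //.
  by rewrite !mulrA [X _ _ * _]mulrC.
rewrite !E1.
rewrite [\sum_m \sum_m' G X Y m m'](eq_bigr (fun m => G X Y m m + \sum_(m' | m' != m) G X Y m m')); last by move=> m _; rewrite (bigD1 m).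
rewrite [\sum_m \sum_m' G Y X m m'](eq_bigr (fun m => G Y X m m + \sum_(m' | m' != m) G Y X m m')); last by move=> m _; rewrite (bigD1 m).
rewrite !big_split /=.
have -> : \sum_m \sum_(m' | m' != m) G X Y m m' = \sum_m \sum_(m' | m' != m) G Y X m m'.
  rewrite (eq_bigr (fun m => \sum_(m' | m' != m) G Y X m' m)); last first.
    by move=> m _; apply: eq_bigr => m' h; rewrite Eo.
  rewrite (exchange_big_dep xpredT) //=.
  by apply: eq_bigr => m _; apply: eq_bigl => m'; rewrite eq_sym.
rewrite opprD addrACA subrr addr0 -sumrB /actT; apply: eq_bigr => m _.
rewrite !Ed -sumrB; apply: eq_bigr => b' _.
by rewrite -mulrBl -sumrB.
Qed.

Lemma WB_eq r d (b1 b2 : WBasis r d) :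
  tag b1 = tag b2 -> (forall j, expo b1 j = expo b2 j) -> b1 = b2.
Proof.
case: b1 b2 => i1 a1 [i2 a2] /= e; subst i2 => h.
congr (Tagged _ _); apply: val_inj; apply/ffunP => j; apply: val_inj; exact: h.
Qed.

Lemma gl_W_nz r d p q (c b : WBasis r d) : gl_W p q c b != 0 ->
  tag c = tag b /\ forall j, (expo c j + (q == j) = expo b j + (p == j))%N.
Proof.
rewrite /gl_W; case: ifP => [/andP[/eqP e /forallP h] _|]; last by rewrite eqxx.
by split => // j; apply/eqP; exact: h.
Qed.

Lemma gl_W_diag r d p (c b : WBasis r d) :
  gl_W p p c b = if c == b then (expo c p)%:R else 0.
Proof.
rewrite /gl_W; case: (eqVneq c b) => [->|ne]; first by rewrite eqxx /=; case: forallP => // [[]] j; rewrite eqxx.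
case: ifP => // /andP[/eqP e /forallP h]; case/eqP: ne; apply: WB_eq => // j.
by move/eqP: (h j) => /addIn.
Qed.

Lemma gl_W_offdiag r d p q (c b b' : WBasis r d) : c != b ->
  gl_W p q c b' * gl_W q p b' b = 0.
Proof.
move=> ne; have [h1|/gl_W_nz [t1 e1]] := eqVneq (gl_W p q c b') 0; first by rewrite h1 mul0r.
have [h2|/gl_W_nz [t2 e2]] := eqVneq (gl_W q p b' b) 0; first by rewrite h2 mulr0.
case/eqP: ne; apply: WB_eq; first by rewrite t1.
move=> j; have := e1 j; have := e2 j; lia.
Qed.

Lemma exists_shift r d (b : WBasis r d) p q : p != q -> (0 < expo b p)%N ->
  exists b', tag b' = tag b /\ forall j, expo b' j =
    if j == p then (expo b p).-1 else if j == q then (expo b q).+1 else expo b j.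
Proof.
move=> npq; case: b => i [a Ha]; rewrite /expo /= => hp.
pose F (j : 'I_r.+1) : nat := if j == p then (a p).-1 else if j == q then (a q).+1 else a j.
have sumF : ((\sum_j F j)%N = nth 0%N d i)%N.
  move/eqP: Ha => <-.
  rewrite (bigD1 p) // (bigD1 q) 1?eq_sym //= [in RHS](bigD1 p) // [in RHS](bigD1 q) 1?eq_sym //=.
  have nqp : q != p by rewrite eq_sym.
  rewrite /F eqxx (negbTE nqp) eqxx.
  rewrite (eq_bigr (fun j => (a j : nat))); last first.
    by move=> j /andP[/negbTE -> /negbTE ->].
  have key S : ((a p).-1 + ((a q).+1 + S) = a p + (a q + S))%N by lia.
  by rewrite key.
have FD j : (F j <= nth 0%N d i)%N.
  by rewrite -sumF (bigD1 j) //= leq_addr.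
pose f : {ffun 'I_r.+1 -> 'I_(nth 0%N d i).+1} := [ffun j => inord (F j)].
have Hf : (\sum_j (f j : nat))%N == nth 0%N d i.
  apply/eqP; transitivity (\sum_j F j)%N; last exact: sumF.
  apply: eq_bigr => j _; rewrite ffunE inordK //.
  by rewrite ltnS.
exists (Tagged (fun i : 'I_(size d) => Mon r (nth 0%N d i)) (exist _ f Hf : Mon r (nth 0%N d i))); split => // j.
by rewrite /= ffunE inordK ?ltnS.
Qed.

Ltac kill_neq := repeat match goal with
  | H : is_true (?a != ?b) |- context [?a == ?b] => rewrite (negbTE H)
  | H : is_true (?a != ?b) |- context [?b == ?a] => rewrite [b == a]eq_sym (negbTE H)
  end.
Ltac cases_pq :=
  match goal with |- context [?j == ?p] =>
   match goal with npq : is_true (p != ?q) |- _ =>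
  case: (eqVneq j p) => [->|?];
  [ | case: (eqVneq j q) => [->|?]];
  rewrite ?eqxx; kill_neq; rewrite /=; lia end end.

Lemma diag_sum r d p q (c : WBasis r d) : p != q ->
  \sum_b gl_W p q c b * gl_W q p b c = ((expo c q).+1 * expo c p)%:R.
Proof.
move=> npq; have nqp : q != p by rewrite eq_sym.
have [z|pos] := posnP (expo c p).
  rewrite z muln0 big1 // => b _.
  have [->|/gl_W_nz [_ /(_ p)]] := eqVneq (gl_W p q c b) 0; first by rewrite mul0r.
  by rewrite z eqxx (negbTE nqp); lia.
have [b' [tb eb]] := exists_shift npq pos.
have G1 : gl_W p q c b' = (expo c q).+1%:R.
  rewrite /gl_W tb eqxx /= eb eqxx (negbTE nqp); case: forallP => // [[]] j.
  by rewrite eb; cases_pq.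
have G2 : gl_W q p b' c = (expo c p)%:R.
  rewrite /gl_W tb eqxx /=; case: forallP => // [[]] j.
  by rewrite eb; cases_pq.
rewrite (bigD1 b') //= G1 G2 -natrM big1 ?addr0 // => b nb.
have [->|/gl_W_nz [t1 e1]] := eqVneq (gl_W p q c b) 0; first by rewrite mul0r.
case/eqP: nb; apply: WB_eq; first by rewrite -t1 tb.
move=> j; have := e1 j; rewrite eb; cases_pq.
Qed.

Lemma comm_mat r d p q (x y : WBasis r d) : p != q ->
  \sum_b (gl_W p q x b * gl_W q p b y - gl_W q p x b * gl_W p q b y) =
  if x == y then (expo x p)%:R - (expo x q)%:R else 0.
Proof.
move=> npq; case: (eqVneq x y) => [<-|nxy]; last first.
  by apply: big1 => b _; rewrite !gl_W_offdiag // subrr.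
rewrite sumrB diag_sum // diag_sum 1?eq_sym //.
by rewrite !mulSn [(expo x p * _)%N]mulnC !natrD opprD addrACA subrr addr0.
Qed.

Definition wt r d t (c : {ffun 'I_t -> WBasis r d}) (j : 'I_r.+1) : nat :=
  (\sum_(m < t) expo (c m) j)%N.

Lemma act_extX r d t X Y (T : tensorW r d t) c :
  (forall x y, X x y = Y x y) -> actT X T c = actT Y T c.
Proof. by move=> h; apply: eq_bigr => m _; apply: eq_bigr => b _; rewrite h. Qed.

Lemma sum_nz (I : finType) (F : I -> algC) : \sum_i F i != 0 -> exists i, F i != 0.
Proof.
move=> h; apply/existsP; apply: contraNT h => /existsPn H.
by apply/eqP; apply: big1 => i _; apply/eqP; move: (H i); rewrite negbK.
Qed.

Lemma diag_act r d t p (T : tensorW r d t) c :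
  gl_act p p T c = (wt c p)%:R * T c.
Proof.
rewrite gl_actE (act_extX _ _ (Y := fun x y => if x == y then (expo x p)%:R else 0)).
  by rewrite act_diag /wt natr_sum.
by move=> x y; rewrite gl_W_diag.
Qed.

Lemma comm_act r d t p q (U : tensorW r d t) c : p != q ->
  gl_act p q (gl_act q p U) c - gl_act q p (gl_act p q U) c =
  ((wt c p)%:R - (wt c q)%:R) * U c.
Proof.
move=> npq; rewrite !gl_actE.
rewrite (act_ext (gl_W p q) (U := actT (gl_W q p) U)) //.
rewrite (act_ext (gl_W q p) (U := actT (gl_W p q) U)) // act_comm.
rewrite (act_extX _ _ (Y := fun x y => if x == y then (expo x p)%:R - (expo x q)%:R else 0)).
  by rewrite act_diag /wt !natr_sum -sumrB.
by move=> x y; rewrite comm_mat.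
Qed.

Lemma wt_upd r d t (c : {ffun 'I_t -> WBasis r d}) m b j :
  (wt (upd c m b) j + expo (c m) j = wt c j + expo b j)%N.
Proof.
rewrite /wt (bigD1 m) //= [in RHS](bigD1 m) //= upd_same.
rewrite (eq_bigr (fun i => expo (c i) j)); last by move=> i h; rewrite upd_other.
have key x y S : (x + S + y = y + S + x)%N by lia.
by rewrite key.
Qed.

Lemma wt_supp r d t lam (T : tensorW r d t) : highest_weight_vector lam T ->
  forall c, T c != 0 -> forall j, wt c j = lam j.
Proof.
case=> _ _ hd _ c nz j; have := hd j c; rewrite diag_act => /(mulIf nz)/eqP.
by rewrite eqr_nat => /eqP.
Qed.

Lemma dominant r d t lam (T : tensorW r d t) : highest_weight_vector lam T ->
  forall p q : 'I_r.+1, (p < q)%N -> (lam q <= lam p)%N.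
Proof.
move=> hw p q lt_pq; have npq : p != q by rewrite neq_ltn lt_pq.
have hw' := hw; case: hw' => _ [c0 nz0] hd hE.
pose Fi j := iter j (gl_act q p) T.
have Sup j : forall c, Fi j c != 0 -> (wt c p + j = lam p)%N /\ wt c q = (lam q + j)%N.
  elim: j => [|j IH] c.
    by move=> nz; rewrite !addn0 !(wt_supp hw nz).
  rewrite /= gl_actE => /sum_nz [m /sum_nz [b]].
  have [->|/gl_W_nz [_ e]] := eqVneq (gl_W q p (c m) b) 0; first by rewrite mul0r eqxx.
  rewrite mulf_eq0 negb_or => /andP[_ /IH [h1 h2]].
  have w1 := wt_upd c m b p; have w2 := wt_upd c m b q.
  have e1 := e p; have e2 := e q; move: e1 e2; rewrite eqxx (negbTE npq) eq_sym (negbTE npq) eqxx /=.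
  lia.
pose h : algC := (lam p)%:R - (lam q)%:R.
have R j : forall c, gl_act p q (Fi j.+1) c = (j.+1)%:R * (h - j%:R) * Fi j c.
  elim: j => [|j IH] c.
    have E0 : gl_act q p (gl_act p q T) c = 0.
      by rewrite gl_actE; apply: act_zero => c'; exact: hE.
    have := comm_act T c npq; rewrite E0 subr0 => ->; rewrite /= mul1r subr0.
    have [->|nz] := eqVneq (T c) 0; first by rewrite !mulr0.
    by rewrite /h !(wt_supp hw nz).
  have := comm_act (Fi j.+1) c npq => /(canRL (subrK _)) ->.
  rewrite gl_actE (act_ext (gl_W q p) (U := fun c => (j.+1)%:R * (h - j%:R) * Fi j c)) //.
  rewrite act_scale -gl_actE.
  have -> : gl_act q p (Fi j) c = Fi j.+1 c by [].
  have [->|nz] := eqVneq (Fi j.+1 c) 0; first by rewrite !mulr0 addr0.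
  have [s1 s2] := Sup _ _ nz.
  rewrite /h s2 -s1 !natrD /=.
  move: (gl_act q p (Fi j) c) (wt c p) (lam q) => u a b.
  rewrite !mulrSr; ring.
have Pend : [forall c, Fi (lam p).+1 c == 0].
  apply/forallP => c; apply/negPn/negP => nz; have [s1 _] := Sup _ _ nz; lia.
have ex : exists n, [forall c, Fi n c == 0] by exists (lam p).+1.
case: (ex_minnP ex) => n Pn hmin.
case: n Pn hmin => [|m] Pn hmin.
  by move/forallP: Pn => /(_ c0); rewrite /= (negbTE nz0).
have : ~~ [forall c, Fi m c == 0] by apply/negP => /hmin; rewrite ltnn.
case/forallPn => c1 nz1.
have := R m c1; rewrite gl_actE act_zero; last by move=> c; apply/eqP; move/forallP: Pn.
move/esym/eqP; rewrite !mulf_eq0 (negbTE nz1) orbF pnatr_eq0 /= subr_eq0 => /eqP.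
rewrite /h => /(canRL (subrK _)); rewrite -natrD => /eqP; rewrite eqr_nat => /eqP ->.
exact: leq_addl.
Qed.

Local Close Scope ring_scope.

Lemma card_Mon_ge r D : 'C(D + r, r) <= #|{: Mon r D}|.
Proof.
rewrite card_sig addnC -card_ord_partitions.
pose h (t : r.+1.-tuple 'I_D.+1) : {ffun 'I_r.+1 -> 'I_D.+1} := [ffun i => tnth t i].
have hinj : injective h.
  by move=> t1 t2 e; apply: eq_from_tnth => i; move/ffunP: e => /(_ i); rewrite !ffunE.
rewrite -(card_imset _ hinj); apply: subset_leq_card; apply/subsetP => f /imsetP [t].
rewrite inE => ht ->; rewrite inE /=; move: ht; rewrite big_tuple.
by under eq_bigr do rewrite ffunE.
Qed.

Lemma card_Mon_le r D : #|{: Mon r D}| <= 'C(D + r, r).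
Proof.
rewrite card_sig addnC -card_ord_partitions.
pose g (f : {ffun 'I_r.+1 -> 'I_D.+1}) : r.+1.-tuple 'I_D.+1 := [tuple f i | i < r.+1].
have ginj : injective g.
  by move=> f1 f2 e; apply/ffunP => i; rewrite -[f1 i](tnth_mktuple f1) -[f2 i](tnth_mktuple f2) -/(g f1) e.
rewrite -(card_imset _ ginj); apply: subset_leq_card; apply/subsetP => t /imsetP [f].
rewrite inE => hf ->; rewrite big_tuple.
by under eq_bigr do rewrite tnth_mktuple.
Qed.

Lemma card_Mon r D : #|{: Mon r D}| = 'C(D + r, r).
Proof. by apply/eqP; rewrite eqn_leq card_Mon_le card_Mon_ge. Qed.

Definition swM r D (j : 'I_r.+1) (a : Mon r D) : Mon r D.
Proof.
exists [ffun i => val a (tperm j ord0 i)].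
case: a => f /= Hf; apply/eqP; transitivity (\sum_i (f i : nat)); last exact/eqP.
rewrite [RHS](reindex_inj (@perm_inj _ (tperm j ord0))) /=.
by apply: eq_bigr => i _; rewrite ffunE.
Defined.

Lemma swMK r D j : involutive (@swM r D j).
Proof.
move=> a; apply: val_inj; apply/ffunP => i; rewrite /= !ffunE.
by rewrite tpermK.
Qed.

Lemma sum_expo_Mon r D (j : 'I_r.+1) :
  \sum_(a : Mon r D) (val a j : nat) = 'C(D + r, r.+1).
Proof.
have sym j' : \sum_(a : Mon r D) (val a j' : nat) = \sum_(a : Mon r D) (val a ord0 : nat).
  rewrite (reindex_inj (inv_inj (@swMK r D j'))) /=.
  by apply: eq_bigr => a _; rewrite ffunE tpermL.
apply/eqP; rewrite -(eqn_pmul2l (ltn0Sn r)) mul_bin_left addnK.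
have -> : r.+1 * \sum_(a : Mon r D) (val a j : nat) = \sum_(j' < r.+1) \sum_(a : Mon r D) (val a j' : nat).
  by rewrite sym (eq_bigr _ (fun j' _ => sym j')) sum_nat_const card_ord.
rewrite exchange_big /= (eq_bigr (fun _ => D)); last by move=> a _; apply/eqP; exact: (valP a).
by rewrite sum_nat_const card_Mon mulnC.
Qed.

Lemma card_avoid r D k : k <= r ->
  #|[set a : Mon r D | [forall j : 'I_r.+1, (j < k) ==> (val a j == 0 :> nat)]]|
    <= 'C(D + r - k, r - k).
Proof.
move=> kr; rewrite (_ : D + r - k = (r - k) + D); last by lia.
rewrite -card_ord_partitions.
pose h (a : Mon r D) : (r-k).+1.-tuple 'I_D.+1 := [tuple val a (inord (i + k)) | i < (r-k).+1].
rewrite -(@card_in_imset _ _ h); last first.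
  move=> a1 a2; rewrite !inE => /forallP h1 /forallP h2 e.
  apply: val_inj; apply/ffunP => j; apply: val_inj.
  case: (ltnP j k) => jk.
    by move: (h1 j) (h2 j); rewrite jk /= => /eqP -> /eqP ->.
  have ik : j - k < (r - k).+1 by have := ltn_ord j; lia.
  have := congr1 (fun t => tnth t (Ordinal ik)) e; rewrite /h !tnth_mktuple /=.
  by rewrite subnK // inord_val => ->.
apply: subset_leq_card; apply/subsetP => t /imsetP [a]; rewrite inE => /forallP ha ->.
rewrite inE big_tuple; under eq_bigr do rewrite tnth_mktuple.
apply/eqP; transitivity (\sum_j (val a j : nat)); last exact/eqP/(valP a).
pose F n := (val a (inord n) : nat).
rewrite (eq_bigr (fun j : 'I_r.+1 => F j)); last by move=> j _; rewrite /F inord_val.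
rewrite -(big_mkord xpredT F) (@big_cat_nat _ _ _ k) /=; [|lia|lia].
rewrite big_nat_cond [X in _ = X + _]big1 ?add0n; last first.
  move=> i /andP[/andP[_ ik] _]; have := ha (inord i); rewrite inordK ?ik /=; last by lia.
  by move/eqP.
rewrite (_ : \sum_(k <= i < r.+1) F i = \sum_(0 + k <= i < r.+1) F i) //.
rewrite big_addn subSn // big_mkord.
by apply: eq_bigr.
Qed.

Lemma sum_B r d (G : WBasis r d -> nat) :
  \sum_(b : WBasis r d) G b =
  \sum_(i < size d) \sum_(a : Mon r (nth 0 d i)) G (Tagged (fun i : 'I_(size d) => Mon r (nth 0 d i)) a).
Proof.
rewrite (sig_big_dep xpredT (fun _ _ => true) (fun i a => G (Tagged (fun i : 'I_(size d) => Mon r (nth 0 d i)) a))) /=.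
by apply: eq_bigr => -[i a].
Qed.

Lemma sum_seq_nth (d : seq nat) (F : nat -> nat) :
  \sum_(i < size d) F (nth 0 d i) = \sum_(di <- d) F di.
Proof. by rewrite (big_nth 0) big_mkord. Qed.

Lemma card_B r d : \sum_(b : WBasis r d) 1 = \sum_(di <- d) 'C(di + r, r).
Proof.
rewrite sum_B -sum_seq_nth; apply: eq_bigr => i _.
by rewrite sum_nat_const muln1 -card_Mon.
Qed.

Lemma sum_expo_B r d j : \sum_(b : WBasis r d) expo b j = \sum_(di <- d) 'C(di + r, r.+1).
Proof.
rewrite sum_B -sum_seq_nth; apply: eq_bigr => i _.
by rewrite -(sum_expo_Mon _ j).
Qed.

Lemma avoid_B r d k : k <= r ->
  \sum_(b : WBasis r d) ((\sum_(j < r.+1 | j < k) expo b j) == 0 : nat)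
    <= \sum_(di <- d) 'C(di + r - k, r - k).
Proof.
move=> kr; rewrite sum_B -(sum_seq_nth d (fun di => 'C(di + r - k, r - k))). apply: leq_sum => i _.
apply: leq_trans (card_avoid (nth 0 d i) kr).
rewrite -sum1_card [X in _ <= X]big_mkcond; apply: leq_sum => a _.
rewrite inE; case: ifP => h; first exact: leq_b1.
by rewrite leqn0 eqb0 sum_nat_eq0; exact: negbT h.
Qed.

Lemma inj_c0 r d t lam (T : tensorW r d t) c0 : highest_weight_vector lam T ->
  (T c0 != 0)%R -> injective c0.
Proof.
case=> alt _ _ _ nz m1 m2 e; apply/eqP; apply/negP => /negP ne.
have := alt c0 m1 m2 ne.
have -> : [ffun m => c0 (tperm m1 m2 m)] = c0.
  by apply/ffunP => m; rewrite ffunE; case: tpermP => // ->.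
by move/eqP; rewrite -addr_eq0 -mulr2n mulrn_eq0 /= (negbTE nz).
Qed.

Lemma main_nat r d k s' t lam : 1 <= k <= r ->
  forall T : tensorW r d t, highest_weight_vector lam T ->
  \sum_(di <- d) 'C(di + r, r) <= \sum_(di <- d) 'C(di + r - k, r - k) + t + k * s' \/
  lam (inord k.-1) + s' < \sum_(di <- d) 'C(di + r, r.+1).
Proof.
move=> /andP[k1 kr] T hw; have hw' := hw; case: hw' => _ [c0 nz0] _ _.
set N := \sum_(di <- d) 'C(di + r, r.+1).
set q : 'I_r.+1 := inord k.-1.
have qv : q = k.-1 :> nat by rewrite inordK //; lia.
have dom (j : 'I_r.+1) : j < k -> lam q <= lam j.
  move=> jk; case: (ltnP j q) => h; first exact: dominant hw _ _ h.
  have -> : j = q by apply: val_inj; rewrite /= qv; move: h; rewrite qv; lia.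
  by [].
case: (ltnP (lam q + s') N) => hN; [by right | left].
have c0inj := inj_c0 hw nz0.
pose S := [set c0 m | m in 'I_t].
have cS : #|S| = t by rewrite card_imset // card_ord.
have F1 j : \sum_(b | b \in S) expo b j = lam j.
  rewrite big_imset /=; last by move=> x y _ _; exact: c0inj.
  by rewrite -(wt_supp hw nz0 j) /wt.
have F3 (j : 'I_r.+1) : j < k -> \sum_(b | b \notin S) expo b j <= s'.
  move=> jk; have := @sum_expo_B r d j; rewrite (bigID (fun b => b \in S)) /= F1 -/N.
  have := dom j jk; lia.
pose X (b : WBasis r d) := \sum_(j < r.+1 | j < k) expo b j.
have e1 : \sum_(b : WBasis r d) 1 = \sum_b ((X b == 0) : nat) + \sum_b ((0 < X b) : nat).
  by rewrite -big_split /=; apply: eq_bigr => b _; case: (X b).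
have e2 : \sum_b ((0 < X b) : nat) <= \sum_b ((b \in S) : nat) + \sum_(b | b \notin S) X b.
  rewrite [X in _ <= _ + X]big_mkcond -big_split /=; apply: leq_sum => b _.
  by case: (b \in S) => /=; case: (X b).
have e3 : \sum_b ((b \in S) : nat) = t.
  by rewrite -cS -sum1_card [RHS]big_mkcond; apply: eq_bigr => b _; case: (b \in S).
have e4 : \sum_(b | b \notin S) X b <= k * s'.
  rewrite /X exchange_big /=.
  apply: (@leq_trans (\sum_(j < r.+1 | j < k) s')); first exact: leq_sum F3.
  rewrite (eq_bigl (fun j : 'I_r.+1 => xpredT (j : nat) && (j < k))) //.
  rewrite -(@big_ord_widen_cond _ _ _ k r.+1 xpredT (fun _ => s')); last by lia.
  by rewrite sum_nat_const card_ord.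
have e5 := avoid_B d kr.
rewrite -card_B; apply: (leq_trans (eq_leq e1)); rewrite -addnA.
apply: leq_add; first exact: e5.
apply: (leq_trans e2); rewrite e3; exact: leq_add (leqnn t) e4.
Qed.

Unset Implicit Arguments.

(* lam is indexed by 'I_r.+1 = {0..r}; the paper's lam_k is lam (inord k.-1). *)
Theorem lemma2p2 (r : nat) (d : seq nat) (s' k t : nat) :
  all (fun di => 2 <= di) d ->
  1 <= k <= r ->
  0 < t ->
  (t%:Z < ((\sum_(di <- d) 'C(di + r, r))%:Z - (\sum_(di <- d) 'C(di + r - k, r - k))%:Z)
            - (k * s')%:Z)%R ->
  forall lam : 'I_r.+1 -> nat, @is_summand_wedge r d t lam ->
  ((lam (inord k.-1))%:Z < (\sum_(di <- d) 'C(di + r, r.+1))%:Z - s'%:Z)%R.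
Proof.
move=> _ hk _ ht lam [T hw].
case: (main_nat s' hk hw) => h; lia.
Qed.
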